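(* Let $p:(S_1,\le)\to(S_2,\le)$ be a bijective monotone map of posets, and let $\mathbb{B}p:\mathbb{B}(S_1,\le)\to\mathbb{B}(S_2,\le)$ be its $\mathbb{B}$-linear extension. If $\sigma:\mathbb{B}(S_2,\le)\to\mathbb{B}(S_1,\le)$ is a monotone map (for inclusion) with $\mathbb{B}p\circ\sigma=\mathrm{id}$, then $\sigma$ is right adjoint to $\mathbb{B}p$ (i.e. $L\subseteq\sigma(L')$ iff $\mathbb{B}p(L)\subseteq L'$) and $\sigma$ is $\mathbb{B}$-linear.
   Context: $\mathbb{B}=\{-\infty,0\}$ is the Boolean semifield; $\mathbb{B}$-modules are join-semilattices with least element and $\mathbb{B}$-linear maps preserve finite joins. For a poset $(S,\le)$, $\mathbb{B}(S,\le)$ is the set of lower subsets of $S$ that are the downward closure of a finite subset, with operation union and ordered by inclusion. For monotone $p$, $\mathbb{B}p$ sends the downward closure of a finite set $F$ to the downward closure of $p(F)$. *)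

(* Defs.v *)
From HB Require Import structures.
From Stdlib Require Import FunctionalExtensionality PropExtensionality.
From mathcomp Require Import all_boot all_order.
Set Implicit Arguments. Unset Strict Implicit. Unset Printing Implicit Defensive.
Import Order.Theory.
Local Open Scope order_scope.

Definition psub (T : Type) (A B : T -> Prop) : Prop := forall x, A x -> B x.

Definition dclos {d : Order.disp_t} {S : porderType d} (F : seq S) : S -> Prop :=
  fun x => exists2 y, y \in F & x <= y.

Definition fg_lower {d : Order.disp_t} {S : porderType d} (L : S -> Prop) : Prop :=
  exists F : seq S, L = dclos F.

(* B(S, <=) : the finitely generated lower subsets of S, ordered by inclusion *)
Definition BS {d : Order.disp_t} (S : porderType d) : Type :=
  {L : S -> Prop | fg_lower L}.

Definition BSval {d : Order.disp_t} {S : porderType d} (L : BS S) : S -> Prop :=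
  proj1_sig L.

Definition BSle {d : Order.disp_t} {S : porderType d} (L L' : BS S) : Prop :=
  psub (BSval L) (BSval L').

Definition BSbot {d : Order.disp_t} (S : porderType d) : BS S :=
  exist _ (dclos [::]) (ex_intro _ [::] erefl).

Lemma fg_lower_union {d : Order.disp_t} {S : porderType d} (L L' : S -> Prop) :
  fg_lower L -> fg_lower L' -> fg_lower (fun x => L x \/ L' x).
Proof.
move=> [F ->] [F' ->]; exists (F ++ F').
apply: functional_extensionality => x; apply: propositional_extensionality.
split.
- by case=> -[y yF xy]; exists y => //; rewrite mem_cat yF ?orbT.
- by case=> y; rewrite mem_cat => /orP [yF|yF] xy; [left|right]; exists y.
Qed.

(* the B-module operation on B(S): union *)
Definition BSjoin {d : Order.disp_t} {S : porderType d} (L L' : BS S) : BS S :=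
  exist _ (fun x => BSval L x \/ BSval L' x)
    (fg_lower_union (proj2_sig L) (proj2_sig L')).

Definition img_dclos {d1 d2 : Order.disp_t} {S1 : porderType d1} {S2 : porderType d2}
  (p : S1 -> S2) (L : S1 -> Prop) : S2 -> Prop :=
  fun y => exists2 x, L x & y <= p x.

Lemma fg_lower_img {d1 d2 : Order.disp_t} {S1 : porderType d1} {S2 : porderType d2}
  (p : S1 -> S2) (hp : {homo p : x y / x <= y}) (L : S1 -> Prop) :
  fg_lower L -> fg_lower (img_dclos p L).
Proof.
move=> [F ->]; exists (map p F).
apply: functional_extensionality => y; apply: propositional_extensionality.
split.
- move=> [x [z zF xz] yx]; exists (p z); first exact: map_f.
  exact: le_trans yx (hp _ _ xz).
- move=> [z /mapP [x xF ->] yz]; exists x => //; exists x => //.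
Qed.

(* Bp : B(S1) -> B(S2); it sends the downward closure of a finite F to the
   downward closure of p(F) (= downward closure of p(down F), p monotone). *)
Definition Bmap {d1 d2 : Order.disp_t} {S1 : porderType d1} {S2 : porderType d2}
  (p : S1 -> S2) (hp : {homo p : x y / x <= y}) (L : BS S1) : BS S2 :=
  exist _ (img_dclos p (BSval L)) (fg_lower_img hp (proj2_sig L)).

Lemma Bmap_dclos {d1 d2 : Order.disp_t} {S1 : porderType d1} {S2 : porderType d2}
  (p : S1 -> S2) (hp : {homo p : x y / x <= y}) (F : seq S1) (hF : fg_lower (dclos F)) :
  BSval (Bmap hp (exist _ (dclos F) hF)) = dclos (map p F).
Proof.
apply: functional_extensionality => y; apply: propositional_extensionality.
split.
- move=> [x [z zF xz] yx]; exists (p z); first exact: map_f.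
  exact: le_trans yx (hp _ _ xz).
- move=> [z /mapP [x xF ->] yz]; exists x => //; exists x => //.
Qed.

(* Main.v *)
Require Import Defs.
From mathcomp Require Import all_boot all_order.
From Stdlib Require Import FunctionalExtensionality PropExtensionality ProofIrrelevance.
Import Order.Theory.
Local Open Scope order_scope.

Lemma BS_ext {d : Order.disp_t} {S : porderType d} (L1 L2 : BS S) :
  (forall x, BSval L1 x <-> BSval L2 x) -> L1 = L2.
Proof.
case: L1 L2 => [A hA] [B hB] /= H.
have E : A = B.
  apply: functional_extensionality => x; apply: propositional_extensionality; exact: H.
subst B; f_equal; apply: proof_irrelevance.
Qed.

Lemma BS_down {d : Order.disp_t} {S : porderType d} (L : BS S) x y :
  BSval L x -> y <= x -> BSval L y.
Proof.
case: L => [A [F E]] /=; rewrite E => -[z zF xz] yx; exists z => //; exact: le_trans yx xz.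
Qed.

Theorem mainTheorem8 (d1 d2 : Order.disp_t) (S1 : porderType d1) (S2 : porderType d2)
  (p : S1 -> S2) (hp : {homo p : x y / x <= y}) (pbij : bijective p)
  (sigma : BS S2 -> BS S1)
  (sigma_mono : forall L L' : BS S2, BSle L L' -> BSle (sigma L) (sigma L'))
  (sigma_sec : forall L' : BS S2, Bmap hp (sigma L') = L') :
  (forall (L : BS S1) (L' : BS S2), BSle L (sigma L') <-> BSle (Bmap hp L) L')
  /\ sigma (BSbot S2) = BSbot S1
  /\ (forall L L' : BS S2, sigma (BSjoin L L') = BSjoin (sigma L) (sigma L')).
Proof.
have pinj : injective p by apply: bij_inj.
have key : forall L' x, BSval (sigma L') x <-> BSval L' (p x).
  move=> L' x; split.
  - move=> hx; rewrite -(sigma_sec L') /=; exists x => //.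
  - move=> hx.
    pose D : BS S2 := exist _ (dclos [:: p x]) (ex_intro _ [:: p x] erefl).
    have DL : BSle D L'.
      move=> y /= [z]; rewrite inE => /eqP -> yz; exact: BS_down hx yz.
    have SM := sigma_mono _ _ DL; rewrite /BSle /psub in SM; apply: SM.
    have : BSval (Bmap hp (sigma D)) (p x).
      by rewrite sigma_sec /=; exists (p x); rewrite ?inE.
    move=> [z hz pxz].
    have : BSval (Bmap hp (sigma D)) (p z) by exists z.
    rewrite sigma_sec /= => -[w]; rewrite inE => /eqP -> pzx.
    have e : p z = p x by apply/eqP; rewrite eq_le pzx pxz.
    by rewrite -(pinj _ _ e).
split; [|split].
- move=> L L'; split.
  + move=> H y /= [x Lx yx]; apply: (BS_down _ (p x) y _ yx); apply/key; exact: H.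
  + move=> H x Lx; apply/key; apply: H; by exists x.
- apply: BS_ext => x; rewrite key /=; split; by case.
- move=> L L'; apply: BS_ext => x; rewrite key /= !key; tauto.
Qed.
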